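(* Let $Q$ be a non-degenerate quadratic form on a finite-dimensional real vector space $V$ with associated bilinear form $Q(\cdot,\cdot)$, let $E\subset V$ be a subspace, $E^Q=\{v: Q(v,e)=0\ \forall e\in E\}$ and $E_0:=E\cap E^Q$. Let $T:E\to V/E$ be linear. Then $Q(Tx,x)=0$ for all $x\in E_0$ (this is well-defined since $x\in E^Q$) if and only if there exists a linear map $T':V\to V$ lifting $T$ (i.e. $T'(e)+E=T(e)$ for all $e\in E$) with $Q(T'x,x)=0$ for all $x\in V$, i.e. $T'\in\mathfrak{so}(Q)$. *)

(* Defs.v *)
From HB Require Import structures.
From mathcomp Require Import all_boot all_order all_algebra.
Set Implicit Arguments. Unset Strict Implicit. Unset Printing Implicit Defensive.
Import Order.TTheory GRing.Theory Num.Theory.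
Local Open Scope ring_scope.

(* V = 'rV[R]_n ; a quadratic form on V is given by its (symmetric) Gram
   matrix Q; the associated bilinear form is bil Q u v = u Q v^T. *)
Definition bil (R : realFieldType) (n : nat) (Q : 'M[R]_n) (u v : 'rV[R]_n) : R :=
  (u *m Q *m v^T) 0 0.

Definition Qnondegenerate (R : realFieldType) (n : nat) (Q : 'M[R]_n) : Prop :=
  forall v : 'rV[R]_n, (forall w : 'rV[R]_n, bil Q v w = 0) -> v = 0.

(* E^Q = {v | Q(v,e) = 0 for all e in E}; E is represented as the row space
   of a square matrix (mxalgebra). *)
Definition Qorth (R : realFieldType) (n : nat) (Q : 'M[R]_n) (E : 'M[R]_n)
  (v : 'rV[R]_n) : Prop :=
  forall e : 'rV[R]_n, (e <= E)%MS -> bil Q v e = 0.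

(* A linear map T : E -> V/E, represented by any set-theoretic choice of
   representatives f : V -> V (only values on E matter): linearity modulo E. *)
Definition lin_to_quot (R : realFieldType) (n : nat) (E : 'M[R]_n)
  (f : 'rV[R]_n -> 'rV[R]_n) : Prop :=
  forall (a : R) (e1 e2 : 'rV[R]_n), (e1 <= E)%MS -> (e2 <= E)%MS ->
    ((f (a *: e1 + e2) - (a *: f e1 + f e2))%R <= E)%MS.

(* Main.v *)
Require Import Defs.
From HB Require Import structures.
From mathcomp Require Import all_boot all_order all_algebra.
From mathcomp Require Import lra.
Import Order.TTheory GRing.Theory Num.Theory.
Local Open Scope ring_scope.

Definition form {R : realFieldType} {n : nat} (X : 'M[R]_n) (a b : 'rV[R]_n) : R :=
  (a *m X *m b^T) 0 0.

Lemma tr11 {R : realFieldType} (M : 'M[R]_1) : M^T 0 0 = M 0 0.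
Proof. by rewrite mxE. Qed.
Lemma B11 {R : realFieldType} (A B : 'M[R]_1) : (A - B) 0 0 = A 0 0 - B 0 0.
Proof. by rewrite !mxE. Qed.

Lemma formT {R : realFieldType} {n : nat} (X : 'M[R]_n) (a b : 'rV[R]_n) :
  form X a b = form X^T b a.
Proof. by rewrite /form -tr11 !trmx_mul trmxK mulmxA. Qed.

Lemma formDl {R : realFieldType} {n : nat} (X : 'M[R]_n) (a b c : 'rV[R]_n) :
  form X (a + b) c = form X a c + form X b c.
Proof. by rewrite /form !mulmxDl mxE. Qed.
Lemma formNl {R : realFieldType} {n : nat} (X : 'M[R]_n) (a c : 'rV[R]_n) :
  form X (- a) c = - form X a c.
Proof. by rewrite /form !mulNmx mxE. Qed.
Lemma formBl {R : realFieldType} {n : nat} (X : 'M[R]_n) (a b c : 'rV[R]_n) :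
  form X (a - b) c = form X a c - form X b c.
Proof. by rewrite formDl formNl. Qed.
Lemma formDr {R : realFieldType} {n : nat} (X : 'M[R]_n) (a b c : 'rV[R]_n) :
  form X c (a + b) = form X c a + form X c b.
Proof. by rewrite /form linearD /= mulmxDr mxE. Qed.
Lemma formBX {R : realFieldType} {n : nat} (X Y : 'M[R]_n) (a b : 'rV[R]_n) :
  form (X - Y) a b = form X a b - form Y a b.
Proof. by rewrite /form mulmxBr mulmxBl B11. Qed.
Lemma formM {R : realFieldType} {n : nat} (A X B : 'M[R]_n) (a b : 'rV[R]_n) :
  form (A *m X *m B^T) a b = form X (a *m A) (b *m B).
Proof. by rewrite /form trmx_mul !mulmxA. Qed.
Lemma bilE {R : realFieldType} {n : nat} (Q : 'M[R]_n) a b : bil Q a b = form Q a b.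
Proof. by []. Qed.

Lemma rows_zero {R : realFieldType} {n : nat} (u : 'rV[R]_n) (A : 'M[R]_n) :
  (forall j, form 1%:M u (row j A) = 0) -> u *m A^T = 0.
Proof.
move=> H; apply/rowP => j; rewrite [RHS]mxE -(H j) /form mulmx1 !mxE.
by apply: eq_bigr => k _; rewrite !mxE.
Qed.

Lemma Qunit {R : realFieldType} {n : nat} (Q : 'M[R]_n) :
  Qnondegenerate Q -> Q \in unitmx.
Proof.
move=> Qnd; rewrite -row_free_unit -kermx_eq0; apply/rowV0P => v /sub_kermxP vQ.
by apply: Qnd => w; rewrite /bil vQ mul0mx mxE.
Qed.

Lemma rankQ {R : realFieldType} {n : nat} (Q X : 'M[R]_n) :
  Q^T = Q -> Q \in unitmx -> \rank (Q *m X) = \rank X.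
Proof.
move=> Qsym Qu; rewrite -mxrank_tr trmx_mul Qsym mxrankMfree ?mxrank_tr //.
by rewrite row_free_unit.
Qed.

Lemma dblorth {R : realFieldType} {n : nat} (Q E : 'M[R]_n) :
  Q^T = Q -> Q \in unitmx -> forall z : 'rV[R]_n,
  (forall y, (y <= kermx (Q *m E^T))%MS -> form Q z y = 0) -> (z <= E)%MS.
Proof.
move=> Qsym Qu z Hz.
set F := kermx (Q *m E^T); set G := kermx (Q *m F^T).
have EG : (E <= G)%MS.
  have h := congr1 trmx (mulmx_ker (Q *m E^T)).
  rewrite trmx0 trmx_mul [(Q *m _)^T]trmx_mul trmxK Qsym in h.
  by rewrite /G sub_kermx mulmxA h.
have rG : \rank G = \rank E.
  rewrite mxrank_ker rankQ // mxrank_tr mxrank_ker rankQ // mxrank_tr.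
  by rewrite subKn // rank_leq_col.
have GE : (G <= E)%MS.
  by have := (mxrank_leqif_sup EG).2; rewrite rG eqxx => <-.
apply: submx_trans _ GE; rewrite /G sub_kermx mulmxA; apply/eqP; apply: rows_zero => j.
by have := Hz (row j F) (row_sub _ _); rewrite /form mulmx1.
Qed.

Lemma f0E {R : realFieldType} {n : nat} (E : 'M[R]_n) f :
  lin_to_quot E f -> (f 0 <= E)%MS.
Proof.
move=> Tlin; have := Tlin 1 0 0 (sub0mx _ _) (sub0mx _ _).
by rewrite scaler0 addr0 scale1r opprD addrA subrr add0r eqmx_opp.
Qed.

Lemma fsum {R : realFieldType} {n : nat} (E : 'M[R]_n) f :
  lin_to_quot E f -> forall (s : seq 'I_n) (c : 'I_n -> R) (r : 'I_n -> 'rV[R]_n),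
  (forall i, (r i <= E)%MS) ->
  ((f (\sum_(i <- s) c i *: r i) - \sum_(i <- s) c i *: f (r i))%R <= E)%MS.
Proof.
move=> Tlin s c r hr; elim: s => [|i s IH].
  by rewrite !big_nil subr0 f0E.
rewrite !big_cons.
set S := \sum_(j <- s) c j *: r j; set S' := \sum_(j <- s) c j *: f (r j).
have SE : (S <= E)%MS by apply: summx_sub => j _; exact: scalemx_sub.
have H1 := Tlin (c i) (r i) S (hr i) SE.
have -> : f (c i *: r i + S) - (c i *: f (r i) + S') =
  (f (c i *: r i + S) - (c i *: f (r i) + f S)) + (f S - S').
  by rewrite !opprD !addrA subrK.
exact: addmx_sub.
Qed.

Lemma lift {R : realFieldType} {n : nat} (E : 'M[R]_n) f :
  lin_to_quot E f -> exists L : 'M[R]_n,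
  forall e, (e <= E)%MS -> ((e *m L - f e)%R <= E)%MS.
Proof.
move=> Tlin; exists (pinvmx E *m \matrix_i f (row i E)) => e eE.
set c := e *m pinvmx E.
have he : e = \sum_i c 0 i *: row i E by rewrite -mulmx_sum_row /c mulmxKpV.
rewrite mulmxA -/c mulmx_sum_row.
under eq_bigr do rewrite rowK.
rewrite [in f e]he -eqmx_opp opprB.
by apply: fsum => // i; exact: row_sub.
Qed.

Theorem mainTheorem10 (R : realFieldType) (n : nat) (Q : 'M[R]_n)
  (Qsym : Q^T = Q) (Qnd : Qnondegenerate Q)
  (E : 'M[R]_n) (f : 'rV[R]_n -> 'rV[R]_n) (Tlin : lin_to_quot E f) :
  (forall x : 'rV[R]_n, (x <= E)%MS -> Qorth Q E x -> bil Q (f x) x = 0)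
  <->
  (exists T' : 'M[R]_n,
     (forall e : 'rV[R]_n, (e <= E)%MS -> ((e *m T' - f e)%R <= E)%MS) /\
     (forall x : 'rV[R]_n, bil Q (x *m T') x = 0)).
Proof.
split; last first.
  move=> [T' [HT Hskew]] x xE xorth.
  have -> : f x = x *m T' - (x *m T' - f x) by rewrite opprB addrC subrK.
  rewrite bilE formBl -bilE Hskew formT Qsym -bilE xorth ?HT //.
  by rewrite subr0.
move=> H.
have Qu := @Qunit _ _ Q Qnd.
have [L HL] := @lift _ _ E f Tlin.
set F := kermx (Q *m E^T).
have orthF : forall x e, (x <= F)%MS -> (e <= E)%MS -> form Q x e = 0.
  move=> x e /sub_kermxP xF /submxP[c ->].
  by rewrite /form trmx_mul !mulmxA -(mulmxA x Q) xF !mul0mx mxE.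
have orthE : forall d x, (d <= E)%MS -> (x <= F)%MS -> form Q d x = 0.
  by move=> d x dE xF; rewrite formT Qsym orthF.
set M := L *m Q.
set E0 := (E :&: F)%MS.
have E0E : (E0 <= E)%MS by exact: capmxSl.
have E0F : (E0 <= F)%MS by exact: capmxSr.
have M0 : forall x, (x <= E0)%MS -> form M x x = 0.
  move=> x xE0.
  have xE := submx_trans xE0 E0E; have xF := submx_trans xE0 E0F.
  have -> : form M x x = form Q (x *m L) x by rewrite /form /M mulmxA.
  rewrite -[x *m L](subrK (f x)) formDl orthE ?HL // add0r.
  by apply: H => // e eE; exact: orthF.
have pol : forall a b, (a <= E0)%MS -> (b <= E0)%MS -> form M a b + form M b a = 0.
  move=> a b aE bE; have := M0 (a + b) (addmx_sub aE bE).
  by rewrite !formDl !formDr (M0 a) // (M0 b) // add0r addr0.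
set E1 := (E :\: F)%MS.
set E2 := (F :\: E)%MS.
have E1E : (E1 <= E)%MS by exact: diffmxSl.
have E2F : (E2 <= F)%MS by exact: diffmxSl.
have d1 : (E :&: E2 = 0)%MS by rewrite capmxC capmx_diff.
have d2 : (F :&: E1 = 0)%MS by rewrite capmxC capmx_diff.
have d3 : (E0 :&: (E1 + E2) = 0)%MS.
  apply/eqP/rowV0P => v; rewrite sub_capmx => /andP[vE0 /sub_addsmxP[[a b] /= def]].
  have x2E : (b *m E2 <= E)%MS.
    have -> : b *m E2 = v - a *m E1 by rewrite def addrAC subrr add0r.
    by rewrite addmx_sub ?eqmx_opp ?(submx_trans vE0 E0E) // (submx_trans _ E1E) ?submxMl.
  have b0 : b *m E2 = 0.
    by apply/eqP; rewrite -submx0 -d1 sub_capmx x2E submxMl.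
  have vE1 : (v <= E1)%MS by rewrite def b0 addr0 submxMl.
  by apply/eqP; rewrite -submx0 -d2 sub_capmx vE1 (submx_trans vE0 E0F).
have decE : forall e : 'rV[R]_n, (e <= E)%MS -> exists e0 e1,
    [/\ (e0 <= E0)%MS, (e1 <= E1)%MS & e = e0 + e1].
  move=> e eE; have : (e <= E1 + E0)%MS by rewrite (addsmx_diff_cap_eq E F).
  case/sub_addsmxP => [[u v] /= ->]; exists (v *m E0), (u *m E1).
  by rewrite !submxMl addrC.
have decF : forall y : 'rV[R]_n, (y <= F)%MS -> exists y0 y2,
    [/\ (y0 <= E0)%MS, (y2 <= E2)%MS & y = y0 + y2].
  move=> y yF; have : (y <= E2 + (F :&: E))%MS by rewrite (addsmx_diff_cap_eq F E).
  rewrite capmxC -/E0.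
  case/sub_addsmxP => [[u v] /= ->]; exists (v *m E0), (u *m E2).
  by rewrite !submxMl addrC.
set pi := proj_mx E E2.
set rho := proj_mx F E1.
set sig := proj_mx E0 (E1 + E2)%MS.
have E1s : (E1 <= E1 + E2)%MS by exact: addsmxSl.
have E2s : (E2 <= E1 + E2)%MS by exact: addsmxSr.
have piE : forall e : 'rV[R]_n, (e <= E)%MS -> e *m pi = e by move=> e; exact: proj_mx_id.
have rhoF : forall y : 'rV[R]_n, (y <= F)%MS -> y *m rho = y by move=> y; exact: proj_mx_id.
have rhoE : forall e : 'rV[R]_n, (e <= E)%MS -> e *m rho = e *m sig.
  move=> e /decE[e0 [e1 [e0E0 e1E1 ->]]].
  rewrite !mulmxDl (proj_mx_id d2 (submx_trans e0E0 E0F)) (proj_mx_0 d2 e1E1).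
  by rewrite (proj_mx_id d3 e0E0) (proj_mx_0 d3 (submx_trans e1E1 E1s)).
have piF : forall y : 'rV[R]_n, (y <= F)%MS -> y *m pi = y *m sig.
  move=> y /decF[y0 [y2 [y0E0 y2E2 ->]]].
  rewrite !mulmxDl (proj_mx_id d1 (submx_trans y0E0 E0E)) (proj_mx_0 d1 y2E2).
  by rewrite (proj_mx_id d3 y0E0) (proj_mx_0 d3 (submx_trans y2E2 E2s)).
set W := pi *m M *m rho^T - rho *m M^T *m pi^T - sig *m M *m sig^T.
have formWQ : forall a b, form Q (a *m (W *m invmx Q)) b = form W a b.
  by move=> a b; rewrite /form !mulmxA -(mulmxA _ (invmx Q) Q) mulVmx // mulmx1.
have Wexp : forall a b, form W a b =
    form M (a *m pi) (b *m rho) - form M (b *m pi) (a *m rho)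
    - form M (a *m sig) (b *m sig).
  by move=> a b; rewrite /W !formBX !formM (formT M^T) trmxK.
exists (W *m invmx Q); split.
  move=> e eE.
  have -> : e *m (W *m invmx Q) - f e =
      (e *m (W *m invmx Q) - e *m L) + (e *m L - f e) by rewrite addrA subrK.
  rewrite addmx_sub ?HL //.
  apply: (@dblorth _ _ Q E Qsym Qu) => y yF.
  rewrite formBl formWQ Wexp piE // rhoF // rhoE // piF //.
  have -> : form Q (e *m L) y = form M e y by rewrite /form /M mulmxA.
  have := pol _ _ (proj_mx_sub E0 (E1 + E2)%MS e) (proj_mx_sub E0 (E1 + E2)%MS y).
  rewrite -/sig => hp.
  lra.
move=> x; rewrite bilE formWQ Wexp subrr M0 ?proj_mx_sub //.
by rewrite subr0.
Qed.
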